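(* Let $d\ge 2$, let $\mathbb{F}_q$ be a finite field of odd characteristic, and let $S_j=\{x\in\mathbb{F}_q^d : Q(x)=j\}$ with $j\in\mathbb{F}_q^*$ and $Q$ a non-degenerate quadratic form over $\mathbb{F}_q$. Then \[R^*(2\rightarrow 4)\lesssim 1.\]
   Context: $\chi$ is a fixed non-trivial additive character of $\mathbb{F}_q$. A quadratic form $Q(x)=\sum_{i,k=1}^d a_{ik}x_ix_k$ with $a_{ik}=a_{ki}\in\mathbb{F}_q$ is non-degenerate if the matrix $(a_{ik})$ is invertible. For $f:S_j\to\mathbb{C}$ and $m\in\mathbb{F}_q^d$, $\widehat{fd\sigma}(m)=\frac{1}{\#S_j}\sum_{x\in S_j}\chi(-x\cdot m)f(x)$. Norms: $\|g\|_{L^r(\mathbb{F}_q^d,dm)}=\big(\sum_{m\in\mathbb{F}_q^d}|g(m)|^r\big)^{1/r}$ and $\|f\|_{L^p(S_j,d\sigma)}=\big(\frac{1}{\#S_j}\sum_{x\in S_j}|f(x)|^p\big)^{1/p}$. $R^*(p\rightarrow r)$ denotes the best constant such that $\|\widehat{fd\sigma}\|_{L^r(\mathbb{F}_q^d,dm)}\le R^*(p\rightarrow r)\|f\|_{L^p(S_j,d\sigma)}$ for all $f:S_j\to\mathbb{C}$. $X\lesssim Y$ means $X\le CY$ for a constant $C$ independent of $q$. *)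

(* Defs.v *)
From HB Require Import structures.
From mathcomp Require Import all_boot all_order all_algebra all_field.
Set Implicit Arguments. Unset Strict Implicit. Unset Printing Implicit Defensive.
Import Order.TTheory GRing.Theory Num.Theory.
Local Open Scope ring_scope.

Definition additive_character (F : finFieldType) (chi : F -> algC) : Prop :=
  (forall x y : F, chi (x + y) = chi x * chi y) /\ chi 0 = 1.

Definition nontrivial_character (F : finFieldType) (chi : F -> algC) : Prop :=
  exists x : F, chi x != 1.

Definition dotv (F : finFieldType) (d : nat) (x m : 'rV[F]_d) : F :=
  \sum_(i < d) x 0 i * m 0 i.

Definition qform (F : finFieldType) (d : nat) (A : 'M[F]_d) (x : 'rV[F]_d) : F :=
  \sum_(i < d) \sum_(k < d) A i k * x 0 i * x 0 k.

Definition nondeg_sym (F : finFieldType) (d : nat) (A : 'M[F]_d) : Prop :=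
  A^T = A /\ A \in unitmx.

Definition Sj (F : finFieldType) (d : nat) (A : 'M[F]_d) (j : F) : {set 'rV[F]_d} :=
  [set x | qform A x == j].

Definition ext_op (F : finFieldType) (d : nat) (chi : F -> algC)
    (S : {set 'rV[F]_d}) (f : 'rV[F]_d -> algC) (m : 'rV[F]_d) : algC :=
  (#|S|%:R)^-1 * \sum_(x in S) chi (- dotv x m) * f x.

Definition Lnorm_dm (F : finFieldType) (d r : nat) (g : 'rV[F]_d -> algC) : algC :=
  r.-root (\sum_(m : 'rV[F]_d) `|g m| ^+ r).

Definition Lnorm_ds (F : finFieldType) (d p : nat) (S : {set 'rV[F]_d})
    (f : 'rV[F]_d -> algC) : algC :=
  p.-root ((#|S|%:R)^-1 * \sum_(x in S) `|f x| ^+ p).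

(* Main.v *)
Require Import Defs.
From HB Require Import structures.
From mathcomp Require Import all_boot all_order all_algebra all_field.
From mathcomp Require Import ring zify.
Import Order.TTheory GRing.Theory Num.Theory.
Set Implicit Arguments. Unset Strict Implicit. Unset Printing Implicit Defensive.
Local Open Scope ring_scope.

Definition bf (F : finFieldType) (d : nat) (A : 'M[F]_d) (x y : 'rV[F]_d) : F :=
  \sum_(i < d) \sum_(k < d) A i k * x 0 i * y 0 k.

Lemma qformE (F : finFieldType) d (A : 'M[F]_d) x : qform A x = bf A x x.
Proof. by []. Qed.

Lemma bf_sym (F : finFieldType) d (A : 'M[F]_d) x y : A^T = A -> bf A x y = bf A y x.
Proof.
move=> hA; rewrite /bf exchange_big /=; apply: eq_bigr => i _; apply: eq_bigr => k _.
have -> : A k i = A i k by rewrite -{1}hA mxE.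
by rewrite mulrAC.
Qed.

Lemma bfDr (F : finFieldType) d (A : 'M[F]_d) x y z : bf A x (y + z) = bf A x y + bf A x z.
Proof.
rewrite /bf -big_split; apply: eq_bigr => i _; rewrite -big_split; apply: eq_bigr => k _.
by rewrite mxE mulrDr.
Qed.

Lemma bfZr (F : finFieldType) d (A : 'M[F]_d) x t y : bf A x (t *: y) = t * bf A x y.
Proof.
rewrite /bf mulr_sumr; apply: eq_bigr => i _; rewrite mulr_sumr; apply: eq_bigr => k _.
by rewrite mxE mulrCA.
Qed.

Lemma bfDl (F : finFieldType) d (A : 'M[F]_d) x y z : bf A (x + y) z = bf A x z + bf A y z.
Proof.
rewrite /bf -big_split; apply: eq_bigr => i _; rewrite -big_split; apply: eq_bigr => k _.
by rewrite mxE mulrDr mulrDl.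
Qed.

Lemma bfZl (F : finFieldType) d (A : 'M[F]_d) x t y : bf A (t *: x) y = t * bf A x y.
Proof.
rewrite /bf mulr_sumr; apply: eq_bigr => i _; rewrite mulr_sumr; apply: eq_bigr => k _.
by rewrite mxE mulrCA !mulrA.
Qed.

Lemma bfNl (F : finFieldType) d (A : 'M[F]_d) x y : bf A (- x) y = - bf A x y.
Proof. by rewrite -(scaleN1r x) bfZl mulN1r. Qed.

Lemma bfNr (F : finFieldType) d (A : 'M[F]_d) x y : bf A x (- y) = - bf A x y.
Proof. by rewrite -(scaleN1r y) bfZr mulN1r. Qed.

Lemma bf0r (F : finFieldType) d (A : 'M[F]_d) x : bf A x 0 = 0.
Proof. by rewrite -(scale0r 0) bfZr mul0r. Qed.

Lemma bf_dot (F : finFieldType) d (A : 'M[F]_d) x y : bf A x y = dotv (x *m A) y.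
Proof.
rewrite /bf /dotv exchange_big /=; apply: eq_bigr => k _.
rewrite mxE mulr_suml; apply: eq_bigr => i _; by rewrite (mulrC (A i k)).
Qed.

Lemma qformD (F : finFieldType) d (A : 'M[F]_d) x y : A^T = A ->
  qform A (x + y) = qform A x + 2 * bf A x y + qform A y.
Proof.
move=> hA; rewrite !qformE bfDl !bfDr (bf_sym y x hA); by rewrite mulr2n mulrDl mul1r !addrA.
Qed.

Lemma qformZ (F : finFieldType) d (A : 'M[F]_d) t x : qform A (t *: x) = t ^+ 2 * qform A x.
Proof. by rewrite !qformE bfZl bfZr mulrA expr2. Qed.

Lemma qformN (F : finFieldType) d (A : 'M[F]_d) x : qform A (- x) = qform A x.
Proof. by rewrite -(scaleN1r x) qformZ sqrrN expr1n mul1r. Qed.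

Lemma dotvDl (F : finFieldType) d (x y m : 'rV[F]_d) : dotv (x + y) m = dotv x m + dotv y m.
Proof. by rewrite /dotv -big_split; apply: eq_bigr => i _; rewrite mxE mulrDl. Qed.
Lemma dotvDr (F : finFieldType) d (x y m : 'rV[F]_d) : dotv m (x + y) = dotv m x + dotv m y.
Proof. by rewrite /dotv -big_split; apply: eq_bigr => i _; rewrite mxE mulrDr. Qed.
Lemma dotvZl (F : finFieldType) d t (x m : 'rV[F]_d) : dotv (t *: x) m = t * dotv x m.
Proof. by rewrite /dotv mulr_sumr; apply: eq_bigr => i _; rewrite mxE mulrA. Qed.
Lemma dotvZr (F : finFieldType) d t (x m : 'rV[F]_d) : dotv m (t *: x) = t * dotv m x.
Proof. by rewrite /dotv mulr_sumr; apply: eq_bigr => i _; rewrite mxE mulrCA. Qed.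
Lemma dotvNl (F : finFieldType) d (x m : 'rV[F]_d) : dotv (- x) m = - dotv x m.
Proof. by rewrite -(scaleN1r x) dotvZl mulN1r. Qed.
Lemma dotv0l (F : finFieldType) d (m : 'rV[F]_d) : dotv 0 m = 0.
Proof. by rewrite -(scale0r 0) dotvZl mul0r. Qed.
Lemma dotv_delta (F : finFieldType) d (b : 'rV[F]_d) i : dotv b (delta_mx 0 i) = b 0 i.
Proof.
rewrite /dotv (bigD1 i) //= big1 ?addr0; first by rewrite mxE !eqxx mulr1.
by move=> k hk; rewrite mxE (negbTE hk) andbF mulr0.
Qed.

Lemma card_sum (T : finType) (P : pred T) : #|[set x | P x]| = (\sum_x (P x : nat))%N.
Proof.
rewrite -sum1_card big_mkcond /=; apply: eq_bigr => x _; by rewrite inE; case: (P x).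
Qed.

Lemma card_shift (F : finFieldType) d (P : pred 'rV[F]_d) w :
  #|[set x | P (x + w)]| = #|[set x | P x]|.
Proof.
rewrite !card_sum (reindex_inj (addIr (- w))) /=; apply: eq_bigr => x _.
by rewrite addrNK.
Qed.

Lemma line_count (F : finFieldType) d (u : 'rV[F]_d) (P D : pred 'rV[F]_d) :
  (forall v, #|[set t : F | P (v + t *: u)%R]| <= 2)%N ->
  (forall v t, P (v + t *: u)%R -> D v) ->
  (#|F| * #|[set x | P x]| <= 2 * #|[set x | D x]|)%N.
Proof.
move=> h2 hD.
have E : (#|F| * #|[set x | P x]| = \sum_(v : 'rV[F]_d) #|[set t : F | P (v + t *: u)%R]|)%N.
  rewrite -sum_nat_const /= (eq_bigr (fun t => #|[set v | P (v + t *: u)%R]|)); last first.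
    by move=> t _; rewrite card_shift.
  under eq_bigr do rewrite card_sum.
  rewrite exchange_big /=; apply: eq_bigr => v _; by rewrite card_sum.
rewrite E card_sum big_distrr /= leq_sum // => v _.
case hv: (D v); first by rewrite muln1.
rewrite muln0 leqn0 cards_eq0; apply/eqP/setP => t; rewrite !inE.
apply/negP => /hD; by rewrite hv.
Qed.

Lemma quad_roots (F : finFieldType) (g b c : F) : g != 0 ->
  (#|[set t : F | (g * t ^+ 2 + b * t + c == 0)%R]| <= 2)%N.
Proof.
move=> hg.
case: (set_0Vmem [set t : F | g * t ^+ 2 + b * t + c == 0]) => [->|[t1]]; first by rewrite cards0.
rewrite inE => /eqP h1.
apply: (leq_trans (subset_leq_card (_ : _ \subset [set t1; - (b / g) - t1]))).
  2: by rewrite cards2; case: (_ != _).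
apply/subsetP => t; rewrite !inE => /eqP ht.
case: (eqVneq t t1) => [->|ne] //=.
apply/eqP.
have : (t - t1) * (g * (t + t1) + b) = 0.
  have -> : (t - t1) * (g * (t + t1) + b) = (g * t ^+ 2 + b * t + c) - (g * t1 ^+ 2 + b * t1 + c) by ring.
  by rewrite ht h1 subrr.
move/eqP; rewrite mulf_eq0 subr_eq0 (negbTE ne) /= => /eqP e.
have -> : t = (g * (t + t1) + b) / g - b / g - t1 by field.
by rewrite e mul0r sub0r.
Qed.

Lemma nz_coord (F : finFieldType) d (b : 'rV[F]_d) : b != 0 -> exists i, b 0 i != 0.
Proof.
move=> hb; case/boolP: [exists i, b 0 i != 0] => [/existsP[i hi]|/existsPn hn]; first by exists i.
exfalso; move/negP: hb; apply; apply/eqP/rowP => i; move: (hn i); rewrite negbK mxE => /eqP ->.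
by [].
Qed.

Lemma hyperplane (F : finFieldType) d (b : 'rV[F]_d) (t : F) : b != 0 ->
  (#|[set x | dotv b x == t]| * #|F| = #|{: 'rV[F]_d}|)%N.
Proof.
move=> hb; have [i hi] := nz_coord hb.
pose v := (b 0 i)^-1 *: (delta_mx 0 i : 'rV[F]_d).
have hv : dotv b v = 1 by rewrite dotvZr dotv_delta mulVf.
have fib : forall s, #|[set x | dotv b x == s]| = #|[set x | dotv b x == 0]|.
  move=> s; rewrite -(card_shift _ (s *: v)); apply: eq_card => x; rewrite !inE.
  by rewrite dotvDr dotvZr hv mulr1 -subr_eq0 addrK.
have -> : #|{: 'rV[F]_d}| = (\sum_(s : F) #|[set x | dotv b x == s]|)%N.
  rewrite -sum1_card (partition_big (dotv b) predT) //=; apply: eq_bigr => s _.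
  by rewrite -sum1_card; apply: eq_bigl => x; rewrite inE.
rewrite (eq_bigr _ (fun s _ => fib s)) sum_nat_const mulnC.
by rewrite fib.
Qed.

Lemma card_fibers (T U : finType) (f : T -> U) (A : {set T}) :
  #|A| = (\sum_(y in f @: A) #|[set x in A | f x == y]|)%N.
Proof.
rewrite -sum1_card (partition_big f (mem (f @: A))) /=; last by move=> x hx; apply: imset_f.
apply: eq_bigr => y _; rewrite -sum1_card; apply: eq_bigl => x; by rewrite inE.
Qed.

Lemma fiber_card (T U : finType) (f : T -> U) (A : {set T}) k :
  (forall y, #|[set x in A | f x == y]| <= k)%N -> (#|A| <= k * #|f @: A|)%N.
Proof.
move=> hk; rewrite (@card_fibers _ _ f) mulnC -sum_nat_const; apply: leq_sum => y _; exact: hk.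
Qed.

Lemma sq_card (F : finFieldType) : (#|F| < 2 * #|(fun t : F => t ^+ 2) @: [set: F]|)%N.
Proof.
set I := (fun t : F => t ^+ 2) @: [set: F].
have h0 : (0 : F) \in I by apply/imsetP; exists 0 => //; rewrite expr0n.
have -> : #|F| = #|[set: F]| by rewrite cardsT.
rewrite (@card_fibers _ _ (fun t : F => t ^+ 2)) -/I (bigD1 0) //=.
have e1 : (#|[set x in [set: F] | x ^+ 2 == 0%R]| <= 1)%N.
  rewrite -(cards1 (0:F)); apply: subset_leq_card; apply/subsetP => x.
  by rewrite !inE expf_eq0 /=.
have e2 : (\sum_(y in I | y != 0%R) #|[set x in [set: F] | x ^+ 2 == y]| <= 2 * (#|I| - 1))%N.
  rewrite (cardsD1 0 I) h0 /= add1n subSS subn0 mulnC -sum_nat_const.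
  rewrite (eq_bigl (fun y => y \in I :\ 0)); last by move=> y; rewrite !inE andbC.
  apply: leq_sum => y _.
  have := @quad_roots F 1 0 (- y) (oner_neq0 F).
  apply: leq_trans; apply: subset_leq_card; apply/subsetP => x; rewrite !inE mul1r mul0r addr0 subr_eq0 //.
have hI : (0 < #|I|)%N by apply/card_gt0P; exists 0.
apply: (leq_ltn_trans (leq_add e1 e2)); move: hI; case: #|I| => // n _.
rewrite subSS subn0 mulnS addnC.
lia.
Qed.

Lemma card_rV (F : finFieldType) d : #|{: 'rV[F]_d}| = (#|F| ^ d)%N.
Proof. by rewrite card_mx mul1n. Qed.

Lemma card_ge3 (F : finFieldType) : (2 : F) != 0 -> (3 <= #|F|)%N.
Proof.
move=> h2.
have h12 : (1 : F) != 2.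
  apply/eqP => e; have : (1:F) = 2 - 1 by ring.
  by rewrite -e subrr; apply/eqP; rewrite oner_eq0.
apply/card_gt2P; exists 0, 1, 2; split => //.
by split; [rewrite eq_sym oner_eq0 | exact: h12 | exact: h2].
Qed.

Lemma nondegA (F : finFieldType) d (A : 'M[F]_d) (a : 'rV[F]_d) :
  A \in unitmx -> a != 0 -> a *m A != 0.
Proof.
move=> hU ha; apply/eqP => e; move/eqP: ha; apply; by rewrite -(mulmxK hU a) e mul0mx.
Qed.

Lemma radical0 (F : finFieldType) d (A : 'M[F]_d) (z : 'rV[F]_d) :
  A \in unitmx -> (forall y, bf A z y = 0) -> z = 0.
Proof.
move=> hU hz; apply/eqP; apply: contraT => nz.
have := nondegA hU nz; move/negP => H; exfalso; apply: H; apply/eqP/rowP => i.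
by rewrite [RHS]mxE -dotv_delta -bf_dot hz.
Qed.

Lemma perp_nonzero (F : finFieldType) d (A : 'M[F]_d) (w : 'rV[F]_d) :
  A \in unitmx -> (2 <= d)%N -> w != 0 -> exists z, z != 0 /\ bf A w z = 0.
Proof.
move=> hU hd hw.
have hb := nondegA hU hw.
have e := hyperplane 0 hb.
have hq : (1 < #|F|)%N by apply/card_gt1P; exists 0, 1; rewrite eq_sym oner_eq0.
have : (1 < #|[set x | dotv (w *m A) x == 0%R]|)%N.
  apply: (leq_trans hq).
  have h1 : (#|F| * #|F| <= #|[set x | dotv (w *m A) x == 0%R]| * #|F|)%N.
    rewrite e card_rV mulnn; apply: leq_pexp2l; [exact: ltnW hq | exact: hd].
  move: h1; rewrite leq_pmul2r //; exact: ltnW hq.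
case/card_gt1P => x [y [hx hy nxy]].
case: (eqVneq x 0) => [ex|nx].
  exists y; split; first by apply: contra nxy => /eqP ->; rewrite ex.
  by move: hy; rewrite inE bf_dot => /eqP.
exists x; split => //; by move: hx; rewrite inE bf_dot => /eqP.
Qed.

Lemma polar (F : finFieldType) d (A : 'M[F]_d) (x y : 'rV[F]_d) : A^T = A -> (2:F) != 0 ->
  bf A x y = (qform A (x + y) - qform A x - qform A y) / 2.
Proof. by move=> hA h2; rewrite qformD //; field. Qed.

Lemma aniso_exists (F : finFieldType) d (A : 'M[F]_d) :
  A^T = A -> A \in unitmx -> (2:F) != 0 -> (0 < d)%N -> exists u, qform A u != 0.
Proof.
move=> hA hU h2 hd; apply/existsP; apply: contraT; move/existsPn => hn.
have hz : forall x, x = 0 :> 'rV[F]_d.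
  move=> x; apply: (radical0 hU) => y.
  by rewrite (polar _ _ hA h2) !(eqP (negbNE (hn _))) !subr0 mul0r.
have := hz (const_mx 1); move/rowP/(_ (Ordinal hd)); rewrite !mxE => /eqP.
by rewrite oner_eq0.
Qed.

Lemma EX (F : finFieldType) d (A : 'M[F]_d) (w : 'rV[F]_d) :
  A^T = A -> A \in unitmx -> (2:F) != 0 -> (2 <= d)%N -> qform A w != 0 ->
  exists u, bf A w u = 0 /\ qform A u != 0.
Proof.
move=> hA hU h2 hd hw.
have wn0 : w != 0 by apply: contra hw => /eqP ->; rewrite qformE bf0r.
case/boolP: [exists u, (bf A w u == 0) && (qform A u != 0)].
  by case/existsP => u /andP[/eqP h1 h2']; exists u.
move/existsPn => hn; exfalso.
have hQ : forall u, bf A w u = 0 -> qform A u = 0.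
  move=> u hu; move: (hn u); rewrite hu eqxx /=; by move/negbNE/eqP.
have [z [zn0 hz]] := perp_nonzero hU hd wn0.
move/negP: zn0; apply; apply/eqP/(radical0 hU) => v.
pose c := bf A w v / qform A w.
pose v' := v - c *: w.
have hv' : bf A w v' = 0.
  rewrite /v' bfDr bfNr bfZr -qformE /c mulfVK //; by rewrite subrr.
have -> : v = v' + c *: w by rewrite /v' subrK.
rewrite bfDr bfZr (@bf_sym _ _ A z w hA) hz mulr0 addr0.
rewrite (polar _ _ hA h2) (hQ _ hz) (hQ _ hv') (hQ (z + v')) ?subrr ?mul0r //.
by rewrite bfDr hz hv' addr0.
Qed.

Lemma exists_point (F : finFieldType) d (A : 'M[F]_d) (c : F) :
  A^T = A -> A \in unitmx -> (2:F) != 0 -> (2 <= d)%N -> exists p, qform A p = c.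
Proof.
move=> hA hU h2 hd.
have [u1 hu1] := aniso_exists hA hU h2 (ltnW hd).
have [u2 [hb hu2]] := EX hA hU h2 hd hu1.
set Sq := (fun t : F => t ^+ 2) @: [set: F].
set X := (fun y => qform A u1 * y) @: Sq.
set Y := (fun y => c - qform A u2 * y) @: Sq.
have cX : #|X| = #|Sq| by apply: card_imset; apply: mulfI.
have cY : #|Y| = #|Sq|.
  apply: card_imset => y1 y2 /= e; apply: (mulfI hu2); apply: oppr_inj; exact: (addrI c).
have hU2 := cardsUI X Y.
have hq := sq_card F.
have : (0 < #|X :&: Y|)%N.
  have := max_card (mem (X :|: Y)); rewrite -/(#|X :|: Y|) => hm.
  move: hU2 hq hm; rewrite cX cY -/Sq; move: #|X :|: Y| #|X :&: Y| #|Sq| #|F| => a b k q; lia.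
case/card_gt0P => y; rewrite inE => /andP[/imsetP[s1 hs1 e1] /imsetP[s2 hs2 e2]].
case/imsetP: hs1 => t1 _ et1; case/imsetP: hs2 => t2 _ et2.
exists (t1 *: u1 + t2 *: u2).
rewrite qformD // !qformZ bfZl bfZr hb !mulr0 addr0 -et1 -et2.
rewrite mulrC -e1 e2; by rewrite [qform A u2 * _]mulrC subrK.
Qed.

Lemma line_quad (F : finFieldType) d (A : 'M[F]_d) (u v : 'rV[F]_d) (c : F) :
  A^T = A -> qform A u != 0 -> (#|[set t : F | qform A (v + t *: u) == c]| <= 2)%N.
Proof.
move=> hA hu.
have := @quad_roots F (qform A u) (2 * bf A v u) (qform A v - c) hu.
apply: leq_trans; apply: subset_leq_card; apply/subsetP => t; rewrite !inE.
rewrite qformD // qformZ bfZr => /eqP <-; apply/eqP; ring.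
Qed.

Lemma Ta_bound (F : finFieldType) d (A : 'M[F]_d) (a : 'rV[F]_d) (j : F) :
  A^T = A -> A \in unitmx -> (2:F) != 0 -> (2 <= d)%N -> j != 0 -> a != 0 ->
  (#|F| ^ 2 * #|[set x | (x \in Sj A j) && ((a - x)%R \in Sj A j)]| <= 2 * #|{: 'rV[F]_d}|)%N.
Proof.
move=> hA hU h2 hd hj ha.
set P := [set x | (x \in Sj A j) && (a - x \in Sj A j)].
have key : forall x, x \in P -> bf A a x = qform A a / 2.
  move=> x; rewrite !inE => /andP[/eqP hx /eqP hax].
  move: hax; rewrite qformD // qformN bfNr hx => e.
  have : qform A a = 2 * bf A a x.
    by apply/eqP; rewrite -subr_eq0; apply/eqP; rewrite -(addrK j (qform A a - _)) -[X in _ - X = _]e; ring.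
  by move=> ->; field.
case/boolP: [exists u, (bf A a u == 0) && (qform A u != 0)].
  case/existsP => u /andP[/eqP hau hu].
  have hl := @line_count F d u (mem P) (fun x => bf A a x == qform A a / 2).
  have e := hyperplane (qform A a / 2) (nondegA hU ha).
  have h1 : (#|F| * #|[set x | x \in P]| <= 2 * #|[set x | bf A a x == qform A a / 2]|)%N.
    apply: hl.
      move=> v; apply: leq_trans (line_quad v j hA hu); apply: subset_leq_card.
      by apply/subsetP => t; rewrite !inE => /andP[].
    move=> v t /key; by rewrite bfDr bfZr hau mulr0 addr0 => ->.
  have eP : [set x | x \in P] = P by apply/setP => x; rewrite inE.
  rewrite eP in h1.
  have eD : [set x | bf A a x == qform A a / 2] = [set x | dotv (a *m A) x == qform A a / 2].
    by apply/setP => x; rewrite !inE bf_dot.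
  rewrite eD in h1; rewrite -e.
  move: h1 (leq_mul (leqnn #|F|) h1); set D := #|[set x | _]|; move: #|P| D #|F| => p D q _.
  rewrite expnS expn1; lia.
move/existsPn => hn.
have hQ : forall u, bf A a u = 0 -> qform A u = 0.
  move=> u hu; move: (hn u); rewrite hu eqxx /=; by move/negbNE/eqP.
case: (eqVneq (qform A a) 0) => [qa0|qa].
  have -> : P = set0.
    apply/setP => x; rewrite in_set0; apply/negP => hx.
    have := key x hx; rewrite qa0 mul0r => /hQ.
    move: hx; rewrite !inE => /andP[/eqP -> _] /eqP; by rewrite (negbTE hj).
  by rewrite cards0 muln0.
have [u [h1 h2']] := EX hA hU h2 hd qa.
by move: h2'; rewrite hQ ?eqxx.
Qed.

Lemma ar (g h z D' n q N : nat) : N = (g + h + z)%N -> D' = (g + z)%N -> (h * q)%N = N ->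
  (q * z <= 2 * D')%N -> (g <= q.-1 * n)%N -> (2 < q)%N -> (N <= 3 * q * n)%N.
Proof.
move=> eN eD eH hZ hS hq.
case: q eH hZ hS hq => [|[|[|r]]] // eH hZ hS _.
rewrite /= in hS.
subst D'.
have s1 : ((r + 2) * N = (r + 3) * (g + z))%N by nia.
have s2 : ((r + 1) * z <= 2 * g)%N by nia.
have s3 : ((r + 2) * (r + 1) * N <= (r + 3) * (r + 3) * g)%N by nia.
have s4 : ((r + 1) * N <= (r + 3) * (r + 3) * n)%N by nia.
nia.
Qed.

Lemma S_lower (F : finFieldType) d (A : 'M[F]_d) (j : F) :
  A^T = A -> A \in unitmx -> (2:F) != 0 -> (2 <= d)%N -> j != 0 ->
  (#|{: 'rV[F]_d}| <= 3 * #|F| * #|Sj A j|)%N.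
Proof.
move=> hA hU h2 hd hj.
have [p hp] := exists_point j hA hU h2 hd.
have hpq : qform A p != 0 by rewrite hp.
have pn0 : p != 0 by apply: contra hpq => /eqP ->; rewrite qformE bf0r.
have [u [hpu hu]] := EX hA hU h2 hd hpq.
set G := [set v | (qform A v != 0) && (bf A p v != 0)].
set H0 := [set v | bf A p v == 0].
set Z := [set v | (bf A p v != 0) && (qform A v == 0)].
set D := [set v | bf A p v != 0].
pose phi v := p + (- (2 * bf A p v) / qform A v) *: v.
have hq3 := card_ge3 h2.
have hG : (#|G| <= (#|F|).-1 * #|Sj A j|)%N.
  apply: (leq_trans (@fiber_card _ _ phi G (#|F|).-1 _)); last first.
    rewrite leq_mul2l; apply/orP; right; apply: subset_leq_card; apply/subsetP => y.
    case/imsetP => v; rewrite inE => /andP[hv1 hv2] ->; rewrite inE qformD // qformZ bfZr hp.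
    apply/eqP; field; exact: hv1.
  move=> y.
  case: (set_0Vmem [set x in G | phi x == y]) => [->|[v0]]; first by rewrite cards0.
  rewrite !inE => /andP[/andP[h01 h02] /eqP e0].
  have hcF : #|[set t : F | t != 0]| = (#|F|).-1.
    by rewrite -(cardsC1 (0:F)); apply: eq_card => t; rewrite !inE.
  rewrite -hcF.
  apply: leq_trans (leq_imset_card (fun t : F => t *: v0) _).
  apply: subset_leq_card; apply/subsetP => v; rewrite !inE => /andP[/andP[h1 h2'] /eqP e].
  pose t := - (2 * bf A p v) / qform A v.
  pose t0 := - (2 * bf A p v0) / qform A v0.
  have ht : t != 0 by rewrite /t mulf_eq0 invr_eq0 oppr_eq0 mulf_eq0 negb_or negb_or h2 h1 h2'.
  have ht0 : t0 != 0 by rewrite /t0 mulf_eq0 invr_eq0 oppr_eq0 mulf_eq0 negb_or negb_or h2 h01 h02.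
  have ee : t *: v = t0 *: v0 by apply: (addrI p); rewrite -/(phi v) -/(phi v0) e e0.
  apply/imsetP; exists (t0 / t); first by rewrite inE mulf_eq0 invr_eq0 negb_or ht0 ht.
  by rewrite mulrC -scalerA -ee scalerA mulVf // scale1r.
have eN : #|{: 'rV[F]_d}| = (#|G| + #|H0| + #|Z|)%N.
  rewrite !card_sum -!big_split /= -sum1_card; apply: eq_bigr => v _.
  by case: (bf A p v == 0); case: (qform A v == 0).
have eD : #|D| = (#|G| + #|Z|)%N.
  rewrite !card_sum -!big_split /=; apply: eq_bigr => v _.
  by case: (bf A p v == 0); case: (qform A v == 0).
have eH : (#|H0| * #|F| = #|{: 'rV[F]_d}|)%N.
  rewrite -(hyperplane 0 (nondegA hU pn0)); congr (_ * _)%N; apply: eq_card => x.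
  by rewrite !inE bf_dot.
have hZ : (#|F| * #|Z| <= 2 * #|D|)%N.
  have hl := @line_count F d u (mem Z) (mem D).
  have eZ : [set x | x \in Z] = Z by apply/setP => x; rewrite inE.
  have eD' : [set x | x \in D] = D by apply/setP => x; rewrite inE.
  rewrite -{1}eZ -eD'; apply: hl.
    move=> v; apply: leq_trans (line_quad v 0 hA hu); apply: subset_leq_card.
    by apply/subsetP => t; rewrite !inE => /andP[].
  move=> v t; rewrite !inE bfDr bfZr hpu mulr0 addr0 => /andP[] //.
have hS := hG.
move: eN eD eH hZ hS hq3.
move: #|G| #|H0| #|Z| #|D| #|Sj A j| #|F| #|{: 'rV[F]_d}| => g h z D' n q N.
move=> eN eD eH hZ hS hq3.
exact: ar eN eD eH hZ hS hq3.
Qed.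

Lemma chi_mulrn (F : finFieldType) (chi : F -> algC) z k :
  additive_character chi -> chi (z *+ k) = chi z ^+ k.
Proof.
move=> [hadd h0]; elim: k => [|k IH]; first by rewrite mulr0n h0 expr0.
by rewrite mulrSr hadd IH exprSr.
Qed.

Lemma chi_norm (F : finFieldType) (chi : F -> algC) z :
  additive_character chi -> `|chi z| = 1.
Proof.
move=> hc; have [p pp hp] := finPcharP F.
have e : `|chi z| ^+ p = 1 by rewrite -normrX -chi_mulrn // mulrn_pchar // hc.2 normr1.
apply/eqP; rewrite -(@pexpr_eq1 _ _ p) ?e //; by apply: prime_gt0.
Qed.

Lemma chi_conj (F : finFieldType) (chi : F -> algC) z :
  additive_character chi -> (chi z)^* = chi (- z).
Proof.
move=> hc.
have h1 : chi z * (chi z)^* = 1 by rewrite -normCK chi_norm // expr1n.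
have h2 : chi (- z) * chi z = 1 by rewrite -hc.1 addNr hc.2.
by rewrite -[LHS]mul1r -h2 -mulrA h1 mulr1.
Qed.

Lemma char_sum (F : finFieldType) d (chi : F -> algC) (c : 'rV[F]_d) :
  additive_character chi -> nontrivial_character chi ->
  \sum_(m : 'rV[F]_d) chi (- dotv c m) = if c == 0 then (#|{: 'rV[F]_d}|)%:R else 0.
Proof.
move=> hc [x0 hx0].
case: (eqVneq c 0) => [->|cn0].
  rewrite (eq_bigr (fun _ => 1)); last by move=> m _; rewrite dotv0l oppr0 hc.2.
  by rewrite sumr_const.
have [i hi] := nz_coord cn0.
pose w : 'rV[F]_d := (- x0 / c 0 i) *: delta_mx 0 i.
have hw : dotv c w = - x0 by rewrite dotvZr dotv_delta mulfVK.
have e : \sum_(m : 'rV[F]_d) chi (- dotv c m) = chi x0 * \sum_(m : 'rV[F]_d) chi (- dotv c m).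
  rewrite {1}(reindex_inj (addIr w)) /= mulr_sumr; apply: eq_bigr => m _.
  by rewrite dotvDr hw opprD opprK hc.1 mulrC.
move: e; set s := \sum_m _ => e.
apply/eqP; move/eqP: e; rewrite -subr_eq0 -{1}(mul1r s) -mulrBl mulf_eq0 subr_eq0.
by rewrite eq_sym (negbTE hx0).
Qed.

Lemma normsum2 (I : finType) (u : I -> algC) :
  `|\sum_a u a| ^+ 2 = \sum_a \sum_b u a * (u b)^*.
Proof. by rewrite normCK rmorph_sum big_distrlr. Qed.

Lemma parseval (F : finFieldType) d (chi : F -> algC) (h : 'rV[F]_d -> algC) :
  additive_character chi -> nontrivial_character chi ->
  \sum_(m : 'rV[F]_d) `|\sum_a chi (- dotv a m) * h a| ^+ 2 =
  (#|{: 'rV[F]_d}|)%:R * \sum_a `|h a| ^+ 2.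
Proof.
move=> hc hn.
under eq_bigr do rewrite normsum2.
rewrite exchange_big /= mulr_sumr; apply: eq_bigr => a _.
rewrite exchange_big /=.
have inner : forall b, \sum_(m : 'rV[F]_d) chi (- dotv a m) * h a * (chi (- dotv b m) * h b)^* =
    h a * (h b)^* * (if a - b == 0 then (#|{: 'rV[F]_d}|)%:R else 0).
  move=> b; rewrite -(char_sum (a - b) hc hn) mulr_sumr; apply: eq_bigr => m _.
  rewrite rmorphM /= chi_conj // opprK dotvDl dotvNl opprD opprK hc.1.
  by rewrite mulrACA mulrC.
under eq_bigr do rewrite inner.
rewrite (bigD1 a) //= subrr eqxx big1 ?addr0; first by rewrite normCK mulrC.
move=> b hb; by rewrite subr_eq0 eq_sym (negbTE hb) mulr0.
Qed.

Lemma regroup (F : finFieldType) d (S : {set 'rV[F]_d}) (phi : 'rV[F]_d -> 'rV[F]_d -> algC) :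
  \sum_(x in S) \sum_(y in S) phi x y = \sum_a \sum_(x in S | a - x \in S) phi x (a - x).
Proof.
under [RHS]eq_bigr do rewrite big_mkcondr /=.
rewrite [RHS]exchange_big /=; apply: eq_bigr => x _.
rewrite [RHS](reindex_inj (addIr x)) /= big_mkcond /=; apply: eq_bigr => y _.
by rewrite addrK.
Qed.

Lemma amgm (x y : algC) : x \is Num.real -> y \is Num.real -> 2 * x * y <= x ^+ 2 + y ^+ 2.
Proof.
move=> hx hy; rewrite -subr_ge0.
have -> : x ^+ 2 + y ^+ 2 - 2 * x * y = (x - y) ^+ 2 by ring.
by rewrite -real_normK ?rpredB // exprn_ge0.
Qed.

Lemma cs_ineq (I : finType) (P : {pred I}) (u : I -> algC) :
  `|\sum_(x in P) u x| ^+ 2 <= (#|P|)%:R * \sum_(x in P) `|u x| ^+ 2.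
Proof.
have h1 : `|\sum_(x in P) u x| <= \sum_(x in P) `|u x| by apply: ler_norm_sum.
have h2 : `|\sum_(x in P) u x| ^+ 2 <= (\sum_(x in P) `|u x|) ^+ 2.
  rewrite ler_pXn2r // ?nnegrE ?normr_ge0 //; by apply: sumr_ge0 => x _.
apply: (le_trans h2).
rewrite expr2 big_distrlr /=.
have h3 : forall x y, `|u x| * `|u y| <= (`|u x| ^+ 2 + `|u y| ^+ 2) / 2.
  move=> x y; rewrite ler_pdivlMr ?ltr0n // mulrC mulrA; apply: amgm; exact: normr_real.
apply: (le_trans (ler_sum _ (fun x _ => ler_sum _ (fun y _ => h3 x y)))).
have E : forall x, \sum_(y in P) (`|u x| ^+ 2 + `|u y| ^+ 2) / 2 = (`|u x| ^+ 2 *+ #|P| + \sum_(y in P) `|u y| ^+ 2) / 2.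
  by move=> x; rewrite -mulr_suml big_split /= sumr_const.
rewrite (eq_bigr _ (fun x _ => E x)).
rewrite -mulr_suml big_split /= sumr_const -sumrMnl.
have hz : forall z : algC, (z + z) / 2 = z.
  by move=> z; rewrite -[z + z]mulr2n -[z *+ 2]mulr_natr mulfK // pnatr_eq0.
by rewrite hz mulr_natl sumrMnl.
Qed.

Definition hfun (F : finFieldType) d (S : {set 'rV[F]_d}) (f : 'rV[F]_d -> algC) (a : 'rV[F]_d) : algC :=
  \sum_(x in S | a - x \in S) f x * f (a - x).

Lemma sq_ext (F : finFieldType) d (chi : F -> algC) (S : {set 'rV[F]_d}) f m :
  additive_character chi ->
  ext_op chi S f m ^+ 2 = (#|S|%:R ^+ 2)^-1 * \sum_a chi (- dotv a m) * hfun S f a.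
Proof.
move=> hc.
rewrite /ext_op exprMn exprVn; congr (_ * _).
rewrite expr2 big_distrlr /=.
rewrite (regroup S (fun x y => chi (- dotv x m) * f x * (chi (- dotv y m) * f y))).
apply: eq_bigr => a _; rewrite /hfun mulr_sumr; apply: eq_bigr => x _.
rewrite mulrACA -hc.1 -opprD -dotvDl addrC subrK.
by [].
Qed.

Lemma L4_eq (F : finFieldType) d (chi : F -> algC) (S : {set 'rV[F]_d}) f :
  additive_character chi -> nontrivial_character chi ->
  \sum_m `|ext_op chi S f m| ^+ 4 =
  (#|S|%:R ^+ 4)^-1 * (#|{: 'rV[F]_d}|)%:R * \sum_a `|hfun S f a| ^+ 2.
Proof.
move=> hc hn.
have e : forall m, `|ext_op chi S f m| ^+ 4 =
    (#|S|%:R ^+ 4)^-1 * `|\sum_a chi (- dotv a m) * hfun S f a| ^+ 2.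
  move=> m; rewrite (_ : 4%N = (2 * 2)%N) // exprM -normrX sq_ext // normrM exprMn.
  by rewrite normfV normrX ger0_norm ?ler0n // exprVn -exprM.
rewrite (eq_bigr _ (fun m _ => e m)) -mulr_sumr parseval // mulrA.
by [].
Qed.

Definition wfun (F : finFieldType) d (S : {set 'rV[F]_d}) (f : 'rV[F]_d -> algC) (a : 'rV[F]_d) : algC :=
  \sum_(x in S | a - x \in S) `|f x| ^+ 2 * `|f (a - x)| ^+ 2.

Lemma W_sum (F : finFieldType) d (S : {set 'rV[F]_d}) f :
  \sum_a wfun S f a = (\sum_(x in S) `|f x| ^+ 2) ^+ 2.
Proof.
by rewrite expr2 big_distrlr /= (regroup S (fun x y => `|f x| ^+ 2 * `|f y| ^+ 2)).
Qed.

Lemma W_ge0 (F : finFieldType) d (S : {set 'rV[F]_d}) f a : 0 <= wfun S f a.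
Proof. by apply: sumr_ge0 => x _; rewrite mulr_ge0 ?exprn_ge0. Qed.

Lemma ha_bound (F : finFieldType) d (S : {set 'rV[F]_d}) f a :
  `|hfun S f a| ^+ 2 <= (#|[set x | (x \in S) && (a - x \in S)]|)%:R * wfun S f a.
Proof.
rewrite /hfun /wfun.
rewrite (eq_bigl (fun x => x \in [set x | (x \in S) && (a - x \in S)])); last by move=> x; rewrite inE.
rewrite [X in _ <= _ * X](eq_bigl (fun x => x \in [set x | (x \in S) && (a - x \in S)])); last by move=> x; rewrite inE.
apply: le_trans (cs_ineq _ _) _.
by rewrite le_eqVlt; apply/orP; left; apply/eqP; congr (_ * _); apply: eq_bigr => x _; rewrite normrM exprMn.
Qed.

Lemma h0_bound (F : finFieldType) d (S : {set 'rV[F]_d}) f :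
  (forall x, (- x \in S) = (x \in S)) ->
  `|hfun S f 0| <= \sum_(x in S) `|f x| ^+ 2.
Proof.
move=> hs; rewrite /hfun.
rewrite (eq_bigl (fun x => x \in S)); last by move=> x; rewrite sub0r hs andbb.
apply: le_trans (ler_norm_sum _ _ _) _.
have h3 : forall x, `|f x * f (0 - x)| <= (`|f x| ^+ 2 + `|f (- x)| ^+ 2) / 2.
  move=> x; rewrite sub0r normrM ler_pdivlMr ?ltr0n // mulrC mulrA; apply: amgm; exact: normr_real.
apply: le_trans (ler_sum _ (fun x _ => h3 x)) _.
rewrite -mulr_suml big_split /=.
have -> : \sum_(x in S) `|f (- x)| ^+ 2 = \sum_(x in S) `|f x| ^+ 2.
  rewrite (reindex_inj (@oppr_inj _)) /=; apply: eq_big => x; by rewrite ?hs // opprK.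
have hz : forall z : algC, (z + z) / 2 = z.
  by move=> z; rewrite -[z + z]mulr2n -[z *+ 2]mulr_natr mulfK // pnatr_eq0.
by rewrite hz.
Qed.

Lemma H2_bound (F : finFieldType) d (S : {set 'rV[F]_d}) f (K : algC) :
  0 <= K -> (forall a, a != 0 -> (#|[set x | (x \in S) && (a - x \in S)]|)%:R <= K) ->
  (forall x, (- x \in S) = (x \in S)) ->
  \sum_a `|hfun S f a| ^+ 2 <= (1 + K) * (\sum_(x in S) `|f x| ^+ 2) ^+ 2.
Proof.
move=> hK hT hs.
set F2 := \sum_(x in S) _.
have hF : 0 <= F2 by apply: sumr_ge0 => x _; apply: exprn_ge0.
rewrite (bigD1 0) //= mulrDl mul1r; apply: lerD.
  rewrite ler_pXn2r // ?nnegrE //; exact: h0_bound.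
apply: le_trans (_ : \sum_(a | a != 0) K * wfun S f a <= _).
  apply: ler_sum => a ha; apply: le_trans (ha_bound S f a) _.
  by apply: ler_wpM2r; [apply: W_ge0 | apply: hT].
rewrite -mulr_sumr -W_sum; apply: ler_wpM2l => //.
rewrite [X in _ <= X](bigD1 0) //= lerDr; exact: W_ge0.
Qed.

Lemma root_le (n : nat) (x y : algC) : (0 < n)%N -> 0 <= x -> 0 <= y -> x <= y ^+ n -> n.-root x <= y.
Proof.
move=> hn hx hy hxy.
rewrite -(ler_pXn2r hn) ?nnegrE ?rootC_ge0 // rootCK //.
Qed.

Lemma nat_final (N q n : nat) : (N <= 3 * q * n)%N -> (q ^ 2 <= N)%N ->
  (N * (q ^ 2 + 2 * N) <= 27 * n ^ 2 * q ^ 2)%N.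
Proof.
move=> h1 h2.
have h3 : (N * N <= 9 * q ^ 2 * n ^ 2)%N.
  have := leq_mul h1 h1; rewrite !expnS !expn0; lia.
have h4 : (N * q ^ 2 <= N * N)%N by rewrite leq_mul2l h2 orbT.
rewrite mulnDr; move: h3 h4; rewrite !expnS !expn0; nia.
Qed.

Lemma main_bound (F : finFieldType) d (chi : F -> algC) (A : 'M[F]_d) (j : F) f :
  additive_character chi -> nontrivial_character chi ->
  A^T = A -> A \in unitmx -> (2:F) != 0 -> (2 <= d)%N -> j != 0 ->
  \sum_m `|ext_op chi (Sj A j) f m| ^+ 4 <=
  27 * ((#|Sj A j|%:R)^-1 * \sum_(x in Sj A j) `|f x| ^+ 2) ^+ 2.
Proof.
move=> hc hn hA hU h2 hd hj.
set S := Sj A j.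
have hs : forall x, (- x \in S) = (x \in S) by move=> x; rewrite !inE qformN.
set N := #|{: 'rV[F]_d}|.
set q := #|F|.
set K : algC := (2 * N)%:R / (q ^ 2)%:R.
have hq3 : (3 <= q)%N := card_ge3 h2.
have hq0 : (0 < q ^ 2)%N by rewrite expn_gt0; apply/orP; left; exact: leq_trans _ hq3.
have hK : 0 <= K by rewrite divr_ge0 ?ler0n.
have hT : forall a, a != 0 -> (#|[set x | (x \in S) && (a - x \in S)]|)%:R <= K.
  move=> a ha; rewrite /K ler_pdivlMr ?ltr0n // -natrM ler_nat mulnC.
  exact: Ta_bound.
have hlow : (N <= 3 * q * #|S|)%N by apply: S_lower.
have hqN : (q ^ 2 <= N)%N by rewrite /N card_rV; apply: leq_pexp2l => //; exact: leq_trans _ hq3.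
have hN0 : (0 < N)%N by apply: leq_trans hqN.
have hn0 : (0 < #|S|)%N.
  case: (posnP #|S|) => // e; move: hlow hN0; rewrite e muln0; lia.
have hnat := nat_final hlow hqN.
set F2 := \sum_(x in S) _.
have hF : 0 <= F2 by apply: sumr_ge0 => x _; apply: exprn_ge0.
rewrite L4_eq //.
have hH := H2_bound f hK hT hs.
rewrite -/N -/F2 in hH *.
set n := #|S| in hn0 hnat hH *.
have key : N%:R * (1 + K) <= 27 * n%:R ^+ 2 :> algC.
  rewrite /K mulrDr mulr1 mulrA -natrM.
  rewrite -[X in X + _](mulfK (_ : (q ^ 2)%:R != 0 :> algC)) ?pnatr_eq0 -?lt0n //.
  rewrite -mulrDl ler_pdivrMr ?ltr0n // -!natrM -natrD -natrX -natrM -natrM ler_nat.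
  by rewrite -mulnDr.
apply: le_trans (_ : (n%:R ^+ 4)^-1 * N%:R * ((1 + K) * F2 ^+ 2) <= _).
  apply: ler_wpM2l; last exact: hH.
  by rewrite mulr_ge0 ?invr_ge0 ?exprn_ge0 ?ler0n.
have hnz : n%:R != 0 :> algC by rewrite pnatr_eq0 -lt0n.
have e : (n%:R ^+ 4)^-1 * N%:R * ((1 + K) * F2 ^+ 2) = (N%:R * (1 + K)) * ((n%:R ^+ 4)^-1 * F2 ^+ 2).
  by ring.
rewrite e; apply: le_trans (ler_wpM2r _ key) _.
  by rewrite mulr_ge0 ?invr_ge0 ?exprn_ge0 ?ler0n.
rewrite le_eqVlt; apply/orP; left; apply/eqP.
field; exact: hnz.
Qed.

Theorem theorem1p2 :
  forall d : nat, (2 <= d)%N ->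
  exists C : algC, 0 <= C /\
  forall (F : finFieldType), ~~ (2%N \in [pchar F]) ->
  forall (chi : F -> algC), additive_character chi -> nontrivial_character chi ->
  forall (A : 'M[F]_d), nondeg_sym A ->
  forall (j : F), j != 0 ->
  forall (f : 'rV[F]_d -> algC),
    Lnorm_dm 4 (ext_op chi (Sj A j) f) <= C * Lnorm_ds 2 (Sj A j) f.
Proof.
move=> d hd; exists 3; split; first by rewrite ler0n.
move=> F hch chi hc hn A [hA hU] j hj f.
have h2 : (2:F) != 0.
  apply: contra hch => h; rewrite inE /=; by rewrite h.
have hb := main_bound f hc hn hA hU h2 hd hj.
rewrite /Lnorm_dm /Lnorm_ds.
set R := _ * \sum_(x in _) _.
have hR : 0 <= R by rewrite mulr_ge0 ?invr_ge0 ?ler0n //; apply: sumr_ge0 => x _; apply: exprn_ge0.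
have hr : 0 <= 2.-root R by rewrite rootC_ge0.
apply: root_le => //.
  by apply: sumr_ge0 => m _; apply: exprn_ge0.
  by rewrite mulr_ge0 ?ler0n.
move: hb; rewrite -/R => hb; apply: (le_trans hb).
rewrite [in X in _ <= X]exprMn (_ : 4%N = (2 * 2)%N) // [X in _ <= _ * X]exprM rootCK //.
rewrite ler_wpM2r ?exprn_ge0 //.
by rewrite (_ : (3 : algC) ^+ (2 * 2) = 81) ?ler_nat //; rewrite -natrX.
Qed.
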